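(* Let $\tau=(12)(34)(56)\in S_7$ acting on $D_7$ (variables $1,\dots,7$). Then $$\phi_9\big((12)(34)(56)(78)\big)=\#\{(a,b,d): a,d\in\Phi_7(\tau),\ b\in D_7,\ a\le b,\ b\vee \tau b\le d\},$$ where $\le$ and $\vee$ are the pointwise order and pointwise maximum of functions.
   Context: $B=\{0,1\}$ with $0\le1$; $B^n$ is ordered componentwise; $D_n$ is the set of monotone functions $B^n\to B$, ordered pointwise ($f\le g$ iff $f(x)\le g(x)$ for all $x$). $S_n$ acts on $D_n$ by $(\pi f)(x_1,\dots,x_n)=f(x_{\pi(1)},\dots,x_{\pi(n)})$. For $\pi\in S_n$, $\Phi_n(\pi)=\{f\in D_n:\pi f=f\}$ and $\phi_n(\pi)=|\Phi_n(\pi)|$. Here $(12)(34)(56)(78)\in S_9$ fixes variable $9$. *)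

(* Defs.v *)
From mathcomp Require Import all_boot all_fingroup.
Set Implicit Arguments. Unset Strict Implicit. Unset Printing Implicit Defensive.

(* B = bool with false <= true; B^n = {ffun 'I_n -> bool}; variables are
   indexed 0..n-1 (variable k of the paper is index k-1). *)
Definition Bn (n : nat) := {ffun 'I_n -> bool}.
Definition BF (n : nat) := {ffun Bn n -> bool}.

Definition leBn n (x y : Bn n) : bool := [forall i, x i ==> y i].
Definition leF n (f g : BF n) : bool := [forall x, f x ==> g x].
Definition joinF n (f g : BF n) : BF n := [ffun x => f x || g x].

Definition monotone n (f : BF n) : bool :=
  [forall x, forall y, leBn x y ==> (f x ==> f y)].

Definition permx n (pi : 'S_n) (x : Bn n) : Bn n := [ffun i => x (pi i)].
Definition actF n (pi : 'S_n) (f : BF n) : BF n := [ffun x => f (permx pi x)].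

Definition Phi n (pi : 'S_n) : {set BF n} :=
  [set f | monotone f & actF pi f == f].
Definition phi n (pi : 'S_n) : nat := #|Phi pi|.

Definition tau7 : 'S_7 :=
  (tperm (inord 0) (inord 1) * tperm (inord 2) (inord 3)
   * tperm (inord 4) (inord 5))%g.
Definition sigma9 : 'S_9 :=
  (tperm (inord 0) (inord 1) * tperm (inord 2) (inord 3)
   * tperm (inord 4) (inord 5) * tperm (inord 6) (inord 7))%g.

(* Main.v *)
Require Import Defs.
From mathcomp Require Import all_boot all_fingroup.
Set Implicit Arguments. Unset Strict Implicit. Unset Printing Implicit Defensive.
Lemma inordE k n (H : k < n.+1) : inord k = Ordinal H.
Proof. by apply/val_inj; rewrite /= inordK. Qed.
Definition sv (n : nat) : nat := match n with 0 => 1 | 1 => 0 | 2 => 3 | 3 => 2 | 4 => 5 | 5 => 4 | 6 => 7 | 7 => 6 | k => k end.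
Definition tv (n : nat) : nat := match n with 0 => 1 | 1 => 0 | 2 => 3 | 3 => 2 | 4 => 5 | 5 => 4 | k => k end.
Lemma sigma9_val (i : 'I_9) : (sigma9 i : nat) = sv i.
Proof.
rewrite /sigma9 !permM !permE /=.
rewrite (@inordE 0 8 isT) (@inordE 1 8 isT) (@inordE 2 8 isT) (@inordE 3 8 isT)
  (@inordE 4 8 isT) (@inordE 5 8 isT) (@inordE 6 8 isT) (@inordE 7 8 isT).
by case: i => [[|[|[|[|[|[|[|[|[|//]]]]]]]]] Hi].
Qed.
Lemma tau7_val (i : 'I_7) : (tau7 i : nat) = tv i.
Proof.
rewrite /tau7 !permM !permE /=.
rewrite (@inordE 0 6 isT) (@inordE 1 6 isT) (@inordE 2 6 isT) (@inordE 3 6 isT)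
  (@inordE 4 6 isT) (@inordE 5 6 isT).
by case: i => [[|[|[|[|[|[|[|//]]]]]]] Hi].
Qed.

Definition ext0 (x : Bn 7) (u v : bool) : Bn 9 :=
  [ffun i : 'I_9 => if (i < 6)%N then x (inord i)
                    else if i == 6 :> nat then u else if i == 7 :> nat then v else x (inord 6)].
Definition restr (y : Bn 9) : Bn 7 :=
  [ffun i : 'I_7 => if (i < 6)%N then y (inord i) else y (inord 8)].

Ltac cleanord := rewrite /= ?inordK //=.
Ltac finord := try (apply: congr1; apply/val_inj; rewrite /= ?tau7_val ?inordK //).

Lemma ext0_restr y : ext0 (restr y) (y (inord 6)) (y (inord 7)) = y.
Proof.
apply/ffunP => i; rewrite !ffunE.
case: i => [[|[|[|[|[|[|[|[|[|//]]]]]]]]] Hi]; cleanord; rewrite ?ffunE; cleanord; finord.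
Qed.

Lemma restr_ext0 x u v : restr (ext0 x u v) = x.
Proof.
apply/ffunP => i; rewrite !ffunE.
case: i => [[|[|[|[|[|[|[|//]]]]]]] Hi]; cleanord; rewrite ?ffunE; cleanord; finord.
Qed.

Lemma ext06 x u v : ext0 x u v (inord 6) = u.
Proof. by rewrite ffunE /= !inordK. Qed.
Lemma ext07 x u v : ext0 x u v (inord 7) = v.
Proof. by rewrite ffunE /= !inordK. Qed.

Lemma permx_ext0 x u v : permx sigma9 (ext0 x u v) = ext0 (permx tau7 x) v u.
Proof.
apply/ffunP => i; rewrite !ffunE !sigma9_val.
case: i => [[|[|[|[|[|[|[|[|[|//]]]]]]]]] Hi]; cleanord; rewrite ?ffunE; finord.


Qed.

Lemma tau7K x : permx tau7 (permx tau7 x) = x.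
Proof.
apply/ffunP => i; rewrite !ffunE; congr (x _); apply/val_inj; rewrite /= !tau7_val.
by case: i => [[|[|[|[|[|[|[|//]]]]]]] Hi].
Qed.

Lemma leBn_ext0 x x' u u' v v' :
  leBn x x' -> (u ==> u') -> (v ==> v') -> leBn (ext0 x u v) (ext0 x' u' v').
Proof.
move/forallP=> H Hu Hv; apply/forallP => i; rewrite !ffunE.
case: ifP => _; first exact: H.
case: ifP => _; first exact: Hu.
case: ifP => _; first exact: Hv.
exact: H.
Qed.


Fact ext_key : unit. Proof. exact: tt. Qed.
Definition ext := locked_with ext_key ext0.
Lemma extE : ext = ext0. Proof. exact: unlock. Qed.
Lemma ext_restr y : ext (restr y) (y (inord 6)) (y (inord 7)) = y.
Proof. by rewrite extE ext0_restr. Qed.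
Lemma restr_ext x u v : restr (ext x u v) = x.
Proof. by rewrite extE restr_ext0. Qed.
Lemma ext6 x u v : ext x u v (inord 6) = u.
Proof. by rewrite extE ext06. Qed.
Lemma ext7 x u v : ext x u v (inord 7) = v.
Proof. by rewrite extE ext07. Qed.
Lemma permx_ext x u v : permx sigma9 (ext x u v) = ext (permx tau7 x) v u.
Proof. by rewrite extE permx_ext0. Qed.
Lemma leBn_ext x x' u u' v v' :
  leBn x x' -> (u ==> u') -> (v ==> v') -> leBn (ext x u v) (ext x' u' v').
Proof. by rewrite extE; apply: leBn_ext0. Qed.

Lemma leBn_refl n (x : Bn n) : leBn x x.
Proof. by apply/forallP => i; apply/implyP. Qed.

Lemma leBn_restr y y' : leBn y y' -> leBn (restr y) (restr y').
Proof.
move/forallP=> H; apply/forallP => i; rewrite !ffunE.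
by case: ifP => _; apply: H.
Qed.

Lemma leBn_permx n (p : 'S_n) x x' : leBn x x' -> leBn (permx p x) (permx p x').
Proof. by move/forallP=> H; apply/forallP => i; rewrite !ffunE; apply: H. Qed.

Lemma monoP n (f : BF n) : monotone f -> forall x y, leBn x y -> f x -> f y.
Proof.
move/forallP=> H x y Hxy; move/forallP: (H x) => /(_ y).
by rewrite Hxy /= => /implyP.
Qed.

Lemma monoI n (f : BF n) : (forall x y, leBn x y -> f x -> f y) -> monotone f.
Proof.
move=> H; apply/forallP => x; apply/forallP => y; apply/implyP => Hxy.
by apply/implyP; apply: H.
Qed.

Lemma PhiP n (p : 'S_n) f :
  f \in Phi p -> monotone f /\ (forall x, f (permx p x) = f x).
Proof.
rewrite inE => /andP [Hm /eqP He]; split => // x.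
by rewrite -{2}He ffunE.
Qed.

Lemma PhiI n (p : 'S_n) f :
  monotone f -> (forall x, f (permx p x) = f x) -> f \in Phi p.
Proof.
move=> Hm He; rewrite inE Hm /=; apply/eqP/ffunP => x.
by rewrite ffunE He.
Qed.

Lemma leFP n (f g : BF n) : leF f g -> forall x, f x -> g x.
Proof. by move/forallP => H x; apply/implyP. Qed.

Lemma leFI n (f g : BF n) : (forall x, f x -> g x) -> leF f g.
Proof. by move=> H; apply/forallP => x; apply/implyP; apply: H. Qed.

Lemma mono_actF n (p : 'S_n) f : monotone f -> monotone (actF p f).
Proof.
move=> Hm; apply: monoI => x y Hxy; rewrite !ffunE.
by apply: (monoP Hm); apply: leBn_permx.
Qed.

Definition gpart (a b d : BF 7) (u v : bool) : BF 7 :=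
  if u then (if v then d else b) else (if v then actF tau7 b else a).

Definition G (t : BF 7 * BF 7 * BF 7) : BF 9 :=
  let: (a, b, d) := t in
  [ffun y : Bn 9 => gpart a b d (y (inord 6)) (y (inord 7)) (restr y)].

Definition F (f : BF 9) : BF 7 * BF 7 * BF 7 :=
  ([ffun x => f (ext x false false)], [ffun x => f (ext x true false)],
   [ffun x => f (ext x true true)]).

Lemma FG t : F (G t) = t.
Proof.
case: t => [[a b] d]; rewrite /F /G.
by congr (_, _, _); apply/ffunP => x; rewrite ffunE /= ffunE ext6 ext7 restr_ext.
Qed.

Lemma GF f : f \in Phi sigma9 -> G (F f) = f.
Proof.
case/PhiP => Hm Hi.
have H : forall x u v, G (F f) (ext x u v) = f (ext x u v).
  move=> x u v; rewrite /G ffunE ext6 ext7 restr_ext.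
  case: u; case: v; rewrite /gpart !ffunE //.
  by rewrite -permx_ext Hi.
apply/ffunP => y.
by have := H (restr y) (y (inord 6)) (y (inord 7)); rewrite ext_restr.
Qed.

Definition Sset := [set abd : BF 7 * BF 7 * BF 7 |
      let: (a, b, d) := abd in
      [&& a \in Phi tau7, d \in Phi tau7, monotone b,
          leF a b & leF (joinF b (actF tau7 b)) d]].

Lemma FS f : f \in Phi sigma9 -> F f \in Sset.
Proof.
case/PhiP => Hm Hi.
have Hmono : forall u v, monotone [ffun x => f (ext x u v)].
  move=> u v; apply: monoI => x y Hxy; rewrite !ffunE; apply: (monoP Hm).
  by apply: leBn_ext => //; apply/implyP.
have Hinv : forall u, [ffun x => f (ext x u u)] \in Phi tau7.
  move=> u; apply: PhiI => // x; rewrite !ffunE.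
  by rewrite -permx_ext Hi.
rewrite inE /F; apply/and5P; split => //.
  apply: leFI => x; rewrite !ffunE; apply: (monoP Hm).
  by apply: leBn_ext => //; apply: leBn_refl.
apply: leFI => x; rewrite !ffunE => /orP [].
  apply: (monoP Hm); by apply: leBn_ext => //; apply: leBn_refl.
rewrite -permx_ext Hi; apply: (monoP Hm).
by apply: leBn_ext => //; apply: leBn_refl.
Qed.

Lemma GS t : t \in Sset -> G t \in Phi sigma9.
Proof.
case: t => [[a b] d]; rewrite inE => /and5P [/PhiP [Ha Hai] /PhiP [Hd Hdi] Hb Hab Hbd].
have Htb : monotone (actF tau7 b) by apply: mono_actF.
have ab : forall x, a x -> b x by apply: leFP.
have atb : forall x, a x -> actF tau7 b x.
  by move=> x; rewrite ffunE -{1}Hai; apply: ab.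
have bd : forall x, b x -> d x.
  by move=> x Hx; apply: (leFP Hbd); rewrite ffunE Hx.
have tbd : forall x, actF tau7 b x -> d x.
  by move=> x Hx; apply: (leFP Hbd); rewrite ffunE Hx orbT.
have gm : forall u v, monotone (gpart a b d u v).
  by case; case.
have gle : forall u u' v v' x, (u ==> u') -> (v ==> v') ->
    gpart a b d u v x -> gpart a b d u' v' x.
  move=> u u' v v' x; case: u; case: u'; case: v; case: v' => //= _ _;
  by [move/bd | move/tbd | move/ab | move/atb | move/ab/bd].
apply: PhiI.
  apply: monoI => y y' Hyy'; rewrite !ffunE => Hg.
  have H6 : y (inord 6) ==> y' (inord 6) by move/forallP: Hyy'.
  have H7 : y (inord 7) ==> y' (inord 7) by move/forallP: Hyy'.
  apply: gle H6 H7 _.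
  by apply: (monoP (gm _ _)) Hg; apply: leBn_restr.
have H : forall x u v, G (a, b, d) (permx sigma9 (ext x u v)) = G (a, b, d) (ext x u v).
  move=> x u v; rewrite permx_ext /G !ffunE !ext6 !ext7 !restr_ext.
  case: u; case: v; rewrite /gpart ?ffunE ?tau7K //.
move=> y.
by have := H (restr y) (y (inord 6)) (y (inord 7)); rewrite ext_restr.
Qed.

Theorem mainTheorem2 :
  phi sigma9 =
  #|[set abd : BF 7 * BF 7 * BF 7 |
      let: (a, b, d) := abd in
      [&& a \in Phi tau7, d \in Phi tau7, monotone b,
          leF a b & leF (joinF b (actF tau7 b)) d]]|.
Proof.
rewrite -/Sset /phi -(card_in_imset (can_in_inj GF)).
suff -> : F @: Phi sigma9 = Sset by []. apply/setP => t; apply/imsetP/idP.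
  by case=> f Hf ->; apply: FS.
by move=> Ht; exists (G t); [apply: GS | rewrite FG].
Qed.
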